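(* Let $K\ge0$ satisfy: $|K(u)|\le\bar K<\infty$, $\int_{\mathbb R}|K(u)|^sdu<\infty$ for some $s>2$, $K(u)=0$ for $|u|>1$, and $|K(u)-K(u')|\le\Lambda_1|u-u'|$ for all $u,u'\in\mathbb R$ with some $1\le\Lambda_1<\infty$. For $x\in[0,1]$ let $G_x=[-1,0]$ if $x=1$, $[-1,1]$ if $x\in(0,1)$, $[0,1]$ if $x=0$, and suppose $\mu(\{u\in G_x:K(u)>0\})>0$ for every $x\in[0,1]$ ($\mu$ Lebesgue measure). Let $$S_{T,x}=\frac1T\sum_{t=1}^TK_h(t/T-x)\begin{pmatrix}1&\frac{t/T-x}{h}\\ \frac{t/T-x}{h}&(\frac{t/T-x}{h})^2\end{pmatrix},$$ with $K_h(u)=K(u/h)/h$, $h=h_T>0$, $h\to0$, $Th\to\infty$. Then there exists $\lambda_0>0$ such that, for all $v\in\mathbb R^2$ and all sufficiently large $T$, $$\sup_{x\in[0,1]}\|S_{T,x}^{-1}v\|\le\frac1{\lambda_0}\|v\|,$$ where $\|\cdot\|$ is the Euclidean norm on $\mathbb R^2$. *)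

(* Defs.v *)
From HB Require Import structures.
From mathcomp Require Import all_boot all_order all_algebra.
From mathcomp Require Import all_classical all_reals all_analysis.
Set Implicit Arguments. Unset Strict Implicit. Unset Printing Implicit Defensive.
Import Order.TTheory GRing.Theory Num.Theory.
Import numFieldNormedType.Exports.
Local Open Scope classical_set_scope.
Local Open Scope ring_scope.

Definition Gset {R : realType} (x : R) : set R :=
  if x == 1 then [set u | -1 <= u <= 0]
  else if x == 0 then [set u | 0 <= u <= 1]
  else [set u | -1 <= u <= 1].

Definition Kh {R : realType} (K : R -> R) (h u : R) : R := K (u / h) / h.

Definition S_Tx {R : realType} (K : R -> R) (h : R) (T : nat) (x : R) : 'M[R]_2 :=
  \matrix_(i < 2, j < 2)
    (T%:R^-1 * \sum_(t < T)
        Kh K h (t.+1%:R / T%:R - x) * ((t.+1%:R / T%:R - x) / h) ^+ (i + j)).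

Definition enorm2 {R : realType} (v : 'cV[R]_2) : R :=
  Num.sqrt (\sum_(i < 2) v i 0 ^+ 2).

(* Main.v *)
Require Import Defs.
From HB Require Import structures.
From mathcomp Require Import all_boot all_order all_algebra.
From mathcomp Require Import all_classical all_reals all_analysis.
From mathcomp Require Import lra ring.
Import Order.TTheory GRing.Theory Num.Theory.
Import numFieldNormedType.Exports.
Local Open Scope ring_scope.
Section Count.
Variable R : realType.

Lemma count_aux (A B : R) (T : nat) : 0 <= A ->
  (T%:R - A <= \sum_(t < T) (((A <= (t.+1)%:R <= B)%R)%:R : R)) \/
  (B - A - 1 <= \sum_(t < T) (((A <= (t.+1)%:R <= B)%R)%:R : R)).
Proof.
move=> A0; elim: T => [|T IH].
  by left; rewrite big_ord0 sub0r oppr_le0.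
rewrite big_ord_recr /=.
have S0 : 0 <= \sum_(t < T) (((A <= (t.+1)%:R <= B)%R)%:R : R).
  by apply: sumr_ge0 => i _; rewrite ler0n.
move: S0 IH.
set S := \sum_(t < T) _.
move=> S0 IH.
case: (boolP (A <= (T.+1)%:R <= B)) => /= H.
  move/andP: H => [H1 H2].
  rewrite -natr1 in H1 H2 *.
  case: IH => IH; [left|right]; lra.
rewrite addr0.
case: (boolP (A <= (T.+1)%:R)) => H1.
  have H2 : ~~ ((T.+1)%:R <= B) by apply: contra H => H2; rewrite H1 H2.
  rewrite -ltNge -natr1 in H2.
  right; case: IH => IH; lra.
left; rewrite -ltNge -natr1 in H1; rewrite -natr1; lra.
Qed.

Lemma count_lb (A B : R) (T : nat) : 0 <= A -> B <= T%:R ->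
  B - A - 1 <= \sum_(t < T) (((A <= (t.+1)%:R <= B)%R)%:R : R).
Proof.
move=> A0 BT; case: (@count_aux A B T A0) => // H; lra.
Qed.
End Count.
Lemma det22 (R : comRingType) (A : 'M[R]_2) : \det A = A 0 0 * A 1 1 - A 0 1 * A 1 0.
Proof.
rewrite (expand_det_row _ 0) !big_ord_recl big_ord0 /cofactor !det_mx11 !mxE /=.
rewrite (_ : lift 0 0 = 1 :> 'I_2); last by apply: val_inj.
rewrite (_ : lift 1 0 = 0 :> 'I_2); last by apply: val_inj.
rewrite (_ : ord0 = 0 :> 'I_2); last by apply: val_inj.
rewrite /= expr0 expr1; ring.
Qed.
Lemma pair_lb (R : realFieldType) (a b u v r : R) : 0 < r -> r <= 1 ->
  -1 <= u -> u <= 1 -> -1 <= v -> v <= 1 -> r / 4 <= v - u ->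
  r ^+ 2 / 100 * (a ^+ 2 + b ^+ 2) <= (a + b * u) ^+ 2 + (a + b * v) ^+ 2.
Proof.
move=> r0 r1 u1 u2 v1 v2 uv.
set F := (a + b * u) ^+ 2 + (a + b * v) ^+ 2.
have h1 : b ^+ 2 * (v - u) ^+ 2 <= 2 * F.
  have E : 2 * F - b^+2*(v-u)^+2 = (2*a+b*u+b*v)^+2 by rewrite /F; ring.
  by rewrite -subr_ge0 E sqr_ge0.
have h2 : b ^+ 2 * (r / 4) ^+ 2 <= b ^+ 2 * (v - u) ^+ 2.
  apply: ler_wpM2l; first by rewrite sqr_ge0.
  rewrite ler_sqr ?nnegrE //; lra.
have u2' : u ^+ 2 <= 1 by nra.
have h3 : a ^+ 2 <= 2 * F + 2 * b ^+ 2.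
  have : b^+2 * u^+2 <= b^+2 by rewrite -[X in _ <= X]mulr1; apply: ler_wpM2l; rewrite ?sqr_ge0.
  have E : 2 * (a+b*u)^+2 + 2*(b^+2*u^+2) - a^+2 = (a+2*b*u)^+2 by ring.
  have := sqr_ge0 (a + 2*b*u); rewrite -E subr_ge0 => H1 H2.
  have := sqr_ge0 (a + b*v); rewrite /F; lra.
have F0 : 0 <= F by rewrite /F addr_ge0 ?sqr_ge0.
have r2 : r ^+ 2 <= 1 by rewrite expr2 mulr_ile1 //; lra.
have E2 : b ^+ 2 * (r / 4) ^+ 2 = (b^+2 * r^+2) / 16 by field.
rewrite E2 in h2.
have r2F : r^+2 * F <= F by rewrite -[X in _ <= X]mul1r; apply: ler_wpM2r.
have ra : r^+2 * a^+2 <= r^+2 * (2 * F + 2 * b ^+ 2) by apply: ler_wpM2l; rewrite ?sqr_ge0.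
rewrite mulrDr in ra.
rewrite -subr_ge0 (_ : F - _ = (100*F - (r^+2*a^+2 + r^+2*b^+2))/100); last by field.
apply: divr_ge0; last by [].
rewrite subr_ge0.
have e1 : r ^+ 2 * (2 * F) = 2 * (r^+2 * F) by ring.
have e2 : r ^+ 2 * (2 * b^+2) = 2 * (b^+2 * r^+2) by ring.
have e3 : r ^+ 2 * b ^+ 2 = b^+2 * r^+2 by ring.
rewrite e1 e2 in ra; rewrite e3.
lra.
Qed.
Section S.
Variable R : realFieldType.

Lemma ind_w (T n x h p q : R) : 0 < T -> 0 < h ->
  T * (x + h * p) <= n <= T * (x + h * q) -> p <= (n / T - x) / h <= q.
Proof.
move=> T0 h0 /andP[H1 H2]; apply/andP; split.
  have a1 : x + h * p <= n / T by rewrite ler_pdivlMr // mulrC.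
  by rewrite ler_pdivlMr // mulrC; lra.
have a1 : n / T <= x + h * q by rewrite ler_pdivrMr // mulrC.
by rewrite ler_pdivrMr // mulrC; lra.
Qed.

Lemma sum_ind_lb (I : finType) (P : pred I) (g : I -> R) (m : R) :
  (forall t, P t -> m <= g t) ->
  m * \sum_(t : I) ((P t)%:R : R) <= \sum_(t : I) (P t)%:R * g t.
Proof.
move=> H; rewrite mulr_sumr; apply: ler_sum => t _.
case: (boolP (P t)) => Pt /=; last by rewrite !mulr0 mul0r.
by rewrite mulr1 mul1r H.
Qed.
End S.

Section Core.
Variable R : realType.

Lemma core (K : R -> R) (c r al h x : R) (T : nat) (a b : R) :
  (forall u, 0 <= K u) -> 0 < c -> 0 < r -> r <= 1 -> -1 <= al -> al + r <= 1 ->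
  (forall u, al <= u <= al + r -> c <= K u) ->
  0 < h -> 0 <= x + h * (al + r / 4) -> x + h * (al + r) <= 1 -> 8 <= T%:R * h * r ->
  c * r ^+ 3 / 1600 * (a ^+ 2 + b ^+ 2) <=
  T%:R^-1 * \sum_(t < T) (Kh K h (t.+1%:R / T%:R - x) *
     (a + b * ((t.+1%:R / T%:R - x) / h)) ^+ 2).
Proof.
move=> K0 c0 r0 r1 al1 al2 KJ h0 hx1 hx2 HT.
have T0 : 0 < T%:R :> R.
  rewrite ltr0n lt0n; apply/eqP => T0; rewrite T0 !mul0r in HT; lra.
set w := fun t : 'I_T => ((t.+1%:R / T%:R - x) / h).
set f := fun t : 'I_T => (a + b * w t) ^+ 2.
have f0 : forall t, 0 <= f t by move=> t; rewrite /f sqr_ge0.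
pose AL := T%:R * (x + h * (al + r / 4)).
pose BL := T%:R * (x + h * (al + r / 2)).
pose AM := T%:R * (x + h * (al + 3 * r / 4)).
pose BM := T%:R * (x + h * (al + r)).
pose PL := fun t : 'I_T => (AL <= t.+1%:R <= BL)%R.
pose PM := fun t : 'I_T => (AM <= t.+1%:R <= BM)%R.
have wL : forall t, PL t -> al + r / 4 <= w t <= al + r / 2.
  by move=> t Pt; apply: ind_w.
have wM : forall t, PM t -> al + 3 * r / 4 <= w t <= al + r.
  by move=> t Pt; apply: ind_w.
have pt : forall t : 'I_T, c / h * ((PL t)%:R * f t + (PM t)%:R * f t) <=
    Kh K h (t.+1%:R / T%:R - x) * f t.
  move=> t; rewrite /Kh -/(w t).
  have Kw0 := K0 (w t).
  case: (boolP (PL t)) => HL; case: (boolP (PM t)) => HM /=.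
  - move: (wL t HL) (wM t HM) => /andP[? ?] /andP[? ?]; lra.
  - move: (wL t HL) => /andP[? ?].
    have : c <= K (w t) by apply: KJ; apply/andP; split; lra.
    move=> Kc; rewrite mul0r addr0 mul1r.
    apply: ler_wpM2r; first exact: f0.
    by rewrite ler_pM2r ?invr_gt0.
  - move: (wM t HM) => /andP[? ?].
    have : c <= K (w t) by apply: KJ; apply/andP; split; lra.
    move=> Kc; rewrite mul0r add0r mul1r.
    apply: ler_wpM2r; first exact: f0.
    by rewrite ler_pM2r ?invr_gt0.
  - rewrite !mul0r addr0 mulr0 mulr_ge0 // ?f0 // divr_ge0 // ltW //.
have sum1 : T%:R^-1 * (c / h * (\sum_(t < T) (PL t)%:R * f t + \sum_(t < T) (PM t)%:R * f t))
   <= T%:R^-1 * \sum_(t < T) (Kh K h (t.+1%:R / T%:R - x) *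
     (a + b * ((t.+1%:R / T%:R - x) / h)) ^+ 2).
  apply: ler_wpM2l; first by rewrite invr_ge0 ltW.
  rewrite -big_split mulr_sumr; apply: ler_sum => t _; exact: pt.
apply: le_trans sum1.
have xr1 : x + h * (al + r / 2) <= 1.
  have : 0 <= h * (r / 2) by rewrite mulr_ge0 ?ltW ?divr_gt0.
  rewrite mulrDr in hx2 *; rewrite mulrDr; lra.
have cntL : T%:R * h * r / 8 <= \sum_(t < T) ((PL t)%:R : R).
  have A0 : 0 <= AL by rewrite /AL mulr_ge0 // ltW.
  have B1 : BL <= T%:R.
    rewrite /BL -[X in _ <= X]mulr1; apply: ler_wpM2l; [exact: ltW|exact: xr1].
  apply: (le_trans _ (@count_lb R _ _ _ A0 B1)).
  rewrite /AL /BL; rewrite -(mulrA (T%:R)) in HT; rewrite !mulrDr in HT *; lra.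
have cntM : T%:R * h * r / 8 <= \sum_(t < T) ((PM t)%:R : R).
  have B1 : BM <= T%:R.
    rewrite /BM -[X in _ <= X]mulr1; apply: ler_wpM2l; [exact: ltW|exact: hx2].
  have A0 : 0 <= AM.
    rewrite /AM mulr_ge0 //.
    have -> : x + h * (al + 3 * r / 4) = (x + h * (al + r / 4)) + h * (r / 2) by field.
    by rewrite addr_ge0 // mulr_ge0 ?ltW ?divr_gt0.
  apply: (le_trans _ (@count_lb R _ _ _ A0 B1)).
  rewrite /AM /BM; rewrite -(mulrA (T%:R)) in HT; rewrite !mulrDr in HT *; lra.
pose kap := r ^+ 2 / 100 * (a ^+ 2 + b ^+ 2).
have kap0 : 0 <= kap by rewrite /kap mulr_ge0 ?divr_ge0 ?sqr_ge0 ?addr_ge0 ?sqr_ge0.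
have SL0 : 0 <= \sum_(t < T) (PL t)%:R * f t.
  by apply: sumr_ge0 => t _; rewrite mulr_ge0 ?ler0n ?f0.
have SM0 : 0 <= \sum_(t < T) (PM t)%:R * f t.
  by apply: sumr_ge0 => t _; rewrite mulr_ge0 ?ler0n ?f0.
have key : kap / 2 * (T%:R * h * r / 8) <=
    \sum_(t < T) (PL t)%:R * f t + \sum_(t < T) (PM t)%:R * f t.
  have pr : forall t t', PL t -> PM t' -> kap <= f t + f t'.
    move=> t t' Ht Ht'; move: (wL t Ht) (wM t' Ht') => /andP[? ?] /andP[? ?].
    apply: pair_lb => //; lra.
  case: (boolP [exists t, PL t && (f t < kap / 2)]).
  - move/existsP=> [t0 /andP[P0 ft0]].
    have H : forall t, PM t -> kap / 2 <= f t.
      move=> t Pt; have := pr t0 t P0 Pt; lra.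
    have := @sum_ind_lb R _ _ _ _ H.
    have : kap / 2 * (T%:R * h * r / 8) <= kap / 2 * \sum_(t < T) ((PM t)%:R : R).
      by apply: ler_wpM2l => //; rewrite divr_ge0.
    lra.
  - move/existsPn => H0.
    have H : forall t, PL t -> kap / 2 <= f t.
      by move=> t Pt; have := H0 t; rewrite Pt /= -leNgt.
    have := @sum_ind_lb R _ _ _ _ H.
    have : kap / 2 * (T%:R * h * r / 8) <= kap / 2 * \sum_(t < T) ((PL t)%:R : R).
      by apply: ler_wpM2l => //; rewrite divr_ge0.
    lra.
have E : c * r ^+ 3 / 1600 * (a ^+ 2 + b ^+ 2) =
   T%:R^-1 * (c / h * (kap / 2 * (T%:R * h * r / 8))).
  rewrite /kap; field; apply/andP; split; apply: lt0r_neq0 => //.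
rewrite E; apply: ler_wpM2l; first by rewrite invr_ge0 ltW.
apply: ler_wpM2l => //; rewrite divr_ge0 // ltW //.
Qed.
End Core.
Lemma quadS (R : realType) (K : R -> R) (h : R) (T : nat) (x a b : R) :
  let S := S_Tx K h T x in
  S 0 0 * a ^+ 2 + (S 0 1 + S 1 0) * (a * b) + S 1 1 * b ^+ 2 =
  T%:R^-1 * \sum_(t < T) (Kh K h (t.+1%:R / T%:R - x) *
     (a + b * ((t.+1%:R / T%:R - x) / h)) ^+ 2).
Proof.
rewrite /= /S_Tx !mxE /=.
rewrite !mulr_sumr -big_split /= !mulr_suml -!big_split /=.
apply: eq_bigr => t _; ring.
Qed.

Lemma S_sym (R : realType) (K : R -> R) (h : R) (T : nat) (x : R) :
  S_Tx K h T x 0 1 = S_Tx K h T x 1 0.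
Proof. by rewrite /S_Tx !mxE. Qed.

Local Open Scope classical_set_scope.

Lemma final_ineq (R : realType) (l y0 y1 v0 v1 : R) : 0 < l ->
  l * (y0 ^+ 2 + y1 ^+ 2) <= y0 * v0 + y1 * v1 ->
  Num.sqrt (y0 ^+ 2 + y1 ^+ 2) <= l^-1 * Num.sqrt (v0 ^+ 2 + v1 ^+ 2).
Proof.
move=> l0 H.
set N := y0 ^+ 2 + y1 ^+ 2; set V := v0 ^+ 2 + v1 ^+ 2.
have N0 : 0 <= N by rewrite addr_ge0 ?sqr_ge0.
have V0 : 0 <= V by rewrite addr_ge0 ?sqr_ge0.
have CS : (y0 * v0 + y1 * v1) ^+ 2 <= N * V.
  rewrite -subr_ge0 (_ : N * V - _ = (y0 * v1 - y1 * v0) ^+ 2) ?sqr_ge0 //.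
  rewrite /N /V; ring.
have key : l ^+ 2 * N <= V.
  have [N00|Npos] := eqVneq N 0.
    by rewrite N00 mulr0.
  have Np : 0 < N by rewrite lt0r Npos N0.
  have lN0 : 0 <= l * N by rewrite mulr_ge0 // ltW.
  have : (l * N) ^+ 2 <= (y0 * v0 + y1 * v1) ^+ 2.
    by rewrite ler_sqr // nnegrE //; apply: le_trans H.
  move=> H2; have H3 := le_trans H2 CS.
  have e : N * (l ^+ 2 * N) = (l * N) ^+ 2 by ring.
  by rewrite -(ler_pM2l Np) e.
have E : l^-1 = Num.sqrt (l^-1 ^+ 2) by rewrite sqrtr_sqr ger0_norm // invr_ge0 ltW.
rewrite E -sqrtrM ?sqr_ge0 // ler_wsqrtr //.
rewrite -(ler_pM2l (_ : 0 < l ^+ 2)) ?exprn_gt0 // mulrA -exprMn mulrV ?unitfE ?lt0r_neq0 //.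
by rewrite expr1n mul1r.
Qed.
Lemma mat_final (R : realType) (K : R -> R) (hh : R) (T : nat) (x lam : R) : 0 < lam ->
  (forall a b, lam * (a ^+ 2 + b ^+ 2) <= T%:R^-1 * \sum_(t < T)
    (Kh K hh (t.+1%:R / T%:R - x) * (a + b * ((t.+1%:R / T%:R - x) / hh)) ^+ 2)) ->
  S_Tx K hh T x \in unitmx /\
  forall v : 'cV[R]_2,
    enorm2 (invmx (S_Tx K hh T x) *m v) <= lam^-1 * enorm2 v.
Proof.
move=> lam0 Q.
have Qs : forall a b, lam * (a ^+ 2 + b ^+ 2) <=
   S_Tx K hh T x 0 0 * a ^+ 2 + (S_Tx K hh T x 0 1 + S_Tx K hh T x 1 0) * (a * b)
   + S_Tx K hh T x 1 1 * b ^+ 2.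
  by move=> a b; rewrite quadS; apply: Q.
have Ssym := @S_sym R K hh T x.
move: Qs Ssym; set S := S_Tx K hh T x => Qs Ssym.
have p_pos : lam <= S 0 0.
  have := Qs 1 0.
  have -> : S 0 0 * 1 ^+ 2 + (S 0 1 + S 1 0) * (1 * 0) + S 1 1 * 0 ^+ 2 = S 0 0 by ring.
  have -> : (1 : R) ^+ 2 + 0 ^+ 2 = 1 by ring.
  by rewrite mulr1.
have p0 : 0 < S 0 0 by apply: lt_le_trans p_pos.
have dpos : 0 < S 0 0 * S 1 1 - S 0 1 * S 1 0.
  have := Qs (- S 0 1) (S 0 0).
  have -> : S 0 0 * (- S 0 1) ^+ 2 + (S 0 1 + S 1 0) * (- S 0 1 * S 0 0) +
      S 1 1 * S 0 0 ^+ 2 = S 0 0 * (S 0 0 * S 1 1 - S 0 1 * S 1 0).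
    rewrite -Ssym; ring.
  move=> H.
  have H2 : 0 < lam * ((- S 0 1) ^+ 2 + S 0 0 ^+ 2).
    apply: mulr_gt0 => //; apply: ltr_wpDl; first exact: sqr_ge0.
    by rewrite exprn_gt0.
  have := lt_le_trans H2 H.
  by rewrite pmulr_rgt0.
have Su : S \in unitmx by rewrite unitmxE det22 unitfE; apply: lt0r_neq0.
split => // v.
set y := invmx S *m v.
have Sy : S *m y = v by rewrite /y mulKVmx.
have i1 : lift ord0 ord0 = 1 :> 'I_2 by apply: val_inj.
have i0 : ord0 = 0 :> 'I_2 by apply: val_inj.
have v0 : v 0 0 = S 0 0 * y 0 0 + S 0 1 * y 1 0.
  by rewrite -Sy mxE !big_ord_recl big_ord0 addr0 i1 i0.
have v1 : v 1 0 = S 1 0 * y 0 0 + S 1 1 * y 1 0.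
  by rewrite -Sy mxE !big_ord_recl big_ord0 addr0 i1 i0.
rewrite /enorm2 !big_ord_recl !big_ord0 !addr0 ?i1 ?i0.
apply: final_ineq => //.
have := Qs (y 0 0) (y 1 0).
have -> : S 0 0 * y 0 0 ^+ 2 + (S 0 1 + S 1 0) * (y 0 0 * y 1 0) + S 1 1 * y 1 0 ^+ 2
   = y 0 0 * v 0 0 + y 1 0 * v 1 0.
  rewrite v0 v1 -Ssym; ring.
by [].
Qed.
Local Open Scope classical_set_scope.
Theorem lemma7 (R : realType) (K : R -> R) (Kbar s Lambda1 : R) (h : nat -> R)
  (K_ge0 : forall u, 0 <= K u)
  (K_bnd : forall u, `|K u| <= Kbar)
  (s_gt2 : 2 < s)
  (K_Ls : (\int[lebesgue_measure]_u ((`|K u| `^ s)%:E) < +oo)%E)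
  (K_supp : forall u, 1 < `|u| -> K u = 0)
  (Lambda1_ge1 : 1 <= Lambda1)
  (K_lip : forall u u', `|K u - K u'| <= Lambda1 * `|u - u'|)
  (K_pos : forall x : R, 0 <= x <= 1 ->
     (0 < lebesgue_measure (Gset x `&` [set u | (0 < K u)%R]))%E)
  (h_pos : forall T, 0 < h T)
  (h_to0 : h @ \oo --> 0)
  (Th_infty : (fun T : nat => T%:R * h T) @ \oo --> +oo) :
  exists2 lambda0 : R, 0 < lambda0 &
    \forall T \near \oo, forall (x : R), 0 <= x <= 1 ->
      S_Tx K (h T) T x \in unitmx /\
      forall v : 'cV[R]_2,
        enorm2 (invmx (S_Tx K (h T) T x) *m v) <= lambda0^-1 * enorm2 v.
Proof.
have G0 : Gset (0:R) = [set u | 0 <= u <= 1].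
  by rewrite /Gset eq_sym oner_eq0 eqxx.
have G1 : Gset (1:R) = [set u | -1 <= u <= 0].
  by rewrite /Gset eqxx.
have [u0 [Hu0 Ku0]] : exists u0, (0 <= u0 <= 1) /\ 0 < K u0.
  apply: contrapT => Hn.
  have := K_pos 0; rewrite lexx ler01 G0 => /(_ isT).
  rewrite (_ : _ `&` _ = set0) ?measure0 ?ltxx //.
  apply/seteqP; split => u //= [Hg HK]; apply: Hn; by exists u.
have [u1 [Hu1 Ku1]] : exists u1, (-1 <= u1 <= 0) /\ 0 < K u1.
  apply: contrapT => Hn.
  have := K_pos 1; rewrite lexx ler01 G1 => /(_ isT).
  rewrite (_ : _ `&` _ = set0) ?measure0 ?ltxx //.
  apply/seteqP; split => u //= [Hg HK]; apply: Hn; by exists u.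
pose c := Num.min (K u0) (K u1).
have c0 : 0 < c by rewrite lt_min Ku0 Ku1.
have cu0 : c <= K u0 by rewrite ge_min lexx.
have cu1 : c <= K u1 by rewrite ge_min lexx orbT.
have L0 : 0 < Lambda1 by apply: lt_le_trans Lambda1_ge1.
pose r := Num.min (c / (2 * Lambda1)) (1 / 2).
have r0 : 0 < r by rewrite lt_min divr_gt0 ?mulr_gt0 //.
have rc : r <= c / (2 * Lambda1) by rewrite ge_min lexx.
have rh : r <= 1 / 2 by rewrite ge_min lexx orbT.
have Lr : Lambda1 * r <= c / 2.
  have : Lambda1 * r <= Lambda1 * (c / (2 * Lambda1)) by rewrite ler_pM2l.
  suff -> : Lambda1 * (c / (2 * Lambda1)) = c / 2 by [].
  by field; rewrite lt0r_neq0.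
have Kball : forall u0 u, c <= K u0 -> `|u - u0| <= r -> c / 2 <= K u.
  move=> w u Kw Hu.
  have := K_lip w u; rewrite [`|w - u|]distrC => H.
  have H2 : Lambda1 * `|u - w| <= Lambda1 * r by rewrite ler_pM2l.
  have H3 := ler_norm (K w - K u).
  lra.
pose a0 := if u0 <= 1/2 then u0 else u0 - r.
have [a00 [a01 a0K]] : 0 <= a0 /\ a0 + r <= 1 /\
    forall u, a0 <= u <= a0 + r -> c / 2 <= K u.
  move: Hu0 => /andP[? ?].
  rewrite /a0; case: ifP => Hu; (split; [|split]).
  - by [].
  - lra.
  - move=> u /andP[? ?]; apply: (Kball u0) => //; rewrite ler_norml; apply/andP; split; lra.
  - move/negbT: Hu; rewrite -ltNge => Hu; lra.
  - lra.
  - move=> u /andP[? ?]; apply: (Kball u0) => //; rewrite ler_norml; apply/andP; split; lra.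
pose a1 := if u1 <= -1/2 then u1 else u1 - r.
have [a10 [a11 a1K]] : -1 <= a1 /\ a1 + r <= 0 /\
    forall u, a1 <= u <= a1 + r -> c / 2 <= K u.
  move: Hu1 => /andP[? ?].
  rewrite /a1; case: ifP => Hu; (split; [|split]).
  - by [].
  - lra.
  - move=> u /andP[? ?]; apply: (Kball u1) => //; rewrite ler_norml; apply/andP; split; lra.
  - move/negbT: Hu; rewrite -ltNge => Hu; lra.
  - lra.
  - move=> u /andP[? ?]; apply: (Kball u1) => //; rewrite ler_norml; apply/andP; split; lra.
pose lam := c / 2 * r ^+ 3 / 1600.
have lam0 : 0 < lam.
  rewrite /lam; apply: divr_gt0; last by rewrite ltr0n.
  by apply: mulr_gt0; [apply: divr_gt0 | apply: exprn_gt0].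
exists lam; first exact: lam0.
have half0 : (0:R) < 1 / 2 by rewrite divr_gt0.
have Fh := cvgr_le 0 h_to0 (1 / 2) half0.
have FT := cvgry_ge Th_infty (8 / r).
near=> T.
have hT : h T <= 1 / 2 by near: T; exact: Fh.
have HT : 8 / r <= T%:R * h T by near: T; exact: FT.
move=> x /andP[x0 x1].
have h0 := h_pos T.
rewrite ler_pdivrMr // in HT.
have r1 : r <= 1 by lra.
have Q : forall a b, lam * (a ^+ 2 + b ^+ 2) <= T%:R^-1 * \sum_(t < T)
    (Kh K (h T) (t.+1%:R / T%:R - x) * (a + b * ((t.+1%:R / T%:R - x) / h T)) ^+ 2).
  move=> a b; case: (lerP x (1/2)) => Hx.
  - apply: (@core R K (c/2) r a0 (h T) x T a b) => //.
    + by rewrite divr_gt0.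
    + lra.
    + have : 0 <= h T * (a0 + r / 4).
        apply: mulr_ge0; first exact: ltW.
        have : 0 <= r / 4 by apply: divr_ge0 => //; exact: ltW.
        lra.
      lra.
    + have : h T * (a0 + r) <= h T * 1 by rewrite ler_pM2l.
      lra.
  - apply: (@core R K (c/2) r a1 (h T) x T a b) => //.
    + by rewrite divr_gt0.
    + lra.
    + have : h T * (-1) <= h T * (a1 + r / 4).
        rewrite ler_pM2l //; have : 0 <= r / 4 by rewrite divr_ge0 ?ltW.
        lra.
      lra.
    + have : h T * (a1 + r) <= h T * 0 by rewrite ler_pM2l.
      lra.
apply: (@mat_final R K (h T) T x lam lam0) => a b; exact: (Q a b).
Unshelve. all: by end_near.
Qed.
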